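(* The graphs $\mathbf{X}_6$ and $\mathbf{X}_7$ are of finite mutation type, i.e. each of them is mutation-equivalent to only finitely many graphs up to isomorphism.
   Context: A graph here is a finite directed multigraph with no loops and no oriented $2$-cycles (never arrows both from $i$ to $j$ and from $j$ to $i$); multiple arrows in the same direction are allowed. Such graphs correspond to skew-symmetric integer matrices $B=(b_{ij})$, with $b_{ij}>0$ meaning $b_{ij}$ arrows from $j$ to $i$. The mutation $\mu_k\Gamma$ of $\Gamma$ at a vertex $k$ is obtained as follows: for every pair of arrows $i\to k$ and $k\to j$ add a new arrow $i\to j$; then reverse every arrow starting or ending at $k$; then repeatedly delete pairs of opposite arrows $i\to j$, $j\to i$ until no oriented $2$-cycles remain. (Equivalently, $b'_{ij}=-b_{ij}$ if $i=k$ or $j=k$, and $b'_{ij}=b_{ij}+[b_{ik}]_+[b_{kj}]_+-[-b_{ik}]_+[-b_{kj}]_+$ otherwise.) Two graphs are mutation-equivalent if one is obtained from the other by a sequence of mutations and a relabeling of vertices. The mutation class of $\Gamma$ is the set of isomorphism classes of graphs mutation-equivalent to $\Gamma$; $\Gamma$ is of finite mutation type (mutation-finite) if its mutation class is finite. $\mathbf{X}_6$ is the graph with vertices $x,w,y_1,z_1,y_2,z_2$ and arrows: two arrows $y_1\to z_1$, one arrow $z_1\to x$, one arrow $x\to y_1$; two arrows $y_2\to z_2$, one arrow $z_2\to x$, one arrow $x\to y_2$; and one arrow $w\to x$. $\mathbf{X}_7$ is the graph with vertices $x,y_1,z_1,y_2,z_2,y_3,z_3$ and, for each $i=1,2,3$,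 two arrows $y_i\to z_i$, one arrow $z_i\to x$ and one arrow $x\to y_i$ (and no other arrows). *)

(* Defs.v *)
From HB Require Import structures.
From mathcomp Require Import all_boot all_order all_algebra all_fingroup.
Set Implicit Arguments. Unset Strict Implicit. Unset Printing Implicit Defensive.
Import Order.TTheory GRing.Theory Num.Theory.
Local Open Scope ring_scope.

(* A graph on vertex set 'I_n is encoded by its skew-symmetric exchange
   matrix B : 'M[int]_n, where B i j > 0 means B i j arrows from j to i. *)

Definition pos_part (x : int) : int := Num.max x 0.

Definition mutation (n : nat) (k : 'I_n) (B : 'M[int]_n) : 'M[int]_n :=
  \matrix_(i, j)
    if (i == k) || (j == k) then - B i j
    else B i j + pos_part (B i k) * pos_part (B k j)
               - pos_part (- B i k) * pos_part (- B k j).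

Definition relabel (n : nat) (s : 'S_n) (B : 'M[int]_n) : 'M[int]_n :=
  \matrix_(i, j) B (s i) (s j).

Definition isomorphic (n : nat) (B C : 'M[int]_n) : Prop :=
  exists s : 'S_n, C = relabel s B.

Inductive mut_equiv (n : nat) (B : 'M[int]_n) : 'M[int]_n -> Prop :=
| me_refl : mut_equiv B B
| me_mut (k : 'I_n) (C : 'M[int]_n) : mut_equiv B C -> mut_equiv B (mutation k C)
| me_relabel (s : 'S_n) (C : 'M[int]_n) : mut_equiv B C -> mut_equiv B (relabel s C).

Definition mutation_finite (n : nat) (B : 'M[int]_n) : Prop :=
  exists l : seq 'M[int]_n,
    forall C, mut_equiv B C -> exists2 D, D \in l & isomorphic D C.

(* Graph given by a list of arrows (source, target, multiplicity). *)
Definition graph_of (n : nat) (arrows : seq (nat * nat * nat)) : 'M[int]_n :=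
  \matrix_(i, j)
    \sum_(a <- arrows)
      ((if (a.1.1 == j :> nat) && (a.1.2 == i :> nat) then (a.2 : int) else 0)
       - (if (a.1.1 == i :> nat) && (a.1.2 == j :> nat) then (a.2 : int) else 0)).

(* X_6: vertices x=0, w=1, y1=2, z1=3, y2=4, z2=5. *)
Definition X6 : 'M[int]_6 :=
  graph_of 6 [:: (2%N, 3%N, 2%N); (3%N, 0%N, 1%N); (0%N, 2%N, 1%N);
                 (4%N, 5%N, 2%N); (5%N, 0%N, 1%N); (0%N, 4%N, 1%N);
                 (1%N, 0%N, 1%N)].

(* X_7: vertices x=0, y1=1, z1=2, y2=3, z2=4, y3=5, z3=6. *)
Definition X7 : 'M[int]_7 :=
  graph_of 7 [:: (1%N, 2%N, 2%N); (2%N, 0%N, 1%N); (0%N, 1%N, 1%N);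
                 (3%N, 4%N, 2%N); (4%N, 0%N, 1%N); (0%N, 3%N, 1%N);
                 (5%N, 6%N, 2%N); (6%N, 0%N, 1%N); (0%N, 5%N, 1%N)].

(* Main.v *)
Require Import Defs.
From mathcomp Require Import all_boot all_order all_algebra all_fingroup.
Set Implicit Arguments. Unset Strict Implicit. Unset Printing Implicit Defensive.
Import Order.TTheory GRing.Theory Num.Theory.
Local Open Scope ring_scope.

Definition fn := nat -> nat -> int.
Definition reprm n (B : 'M[int]_n) (f : fn) := forall i j : 'I_n, B i j = f i j.
Definition pp (x : int) : int := match x with Posz m => Posz m | Negz _ => 0 end.

Lemma ppE x : pos_part x = pp x.
Proof.
case: x => m; rewrite /pos_part /=.
  by apply/max_idPl.
by apply/max_idPr; rewrite NegzE oppr_le0.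
Qed.

Definition mutf (k : nat) (f : fn) : fn := fun i j =>
  if (i == k)%N || (j == k)%N then - f i j
  else f i j + pp (f i k) * pp (f k j) - pp (- f i k) * pp (- f k j).

Lemma mutE n (k : 'I_n) B f : reprm B f -> reprm (mutation k B) (mutf k f).
Proof. by move=> H i j; rewrite /mutation mxE /mutf !H !ppE. Qed.

Definition sw (a b x : nat) : nat := if (x == a)%N then b else if (x == b)%N then a else x.
Definition swapf a b (f : fn) : fn := fun i j => f (sw a b i) (sw a b j).
Fixpoint swaps (ps : seq (nat * nat)) (f : fn) : fn :=
  if ps is p :: ps' then swapf p.1 p.2 (swaps ps' f) else f.

Lemma tpermV n' a b (i : 'I_n'.+1) : (a < n'.+1)%N -> (b < n'.+1)%N ->
  (tperm (inord a) (inord b) i : nat) = sw a b i.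
Proof.
move=> Ha Hb; rewrite /sw; case: tpermP => [->|->|Hia Hib].
- by rewrite !inordK ?eqxx.
- rewrite !inordK ?eqxx //; by case: eqP => [->|].
case: eqP => [Hi|_]; first by case: Hia; apply/val_inj; rewrite /= Hi inordK.
case: eqP => [Hi|_] //; by case: Hib; apply/val_inj; rewrite /= Hi inordK.
Qed.

Lemma relabelM n (u t : 'S_n) M : relabel u (relabel t M) = relabel (u * t) M.
Proof. by apply/matrixP => i j; rewrite !mxE !permM. Qed.

Lemma swapE n' (B : 'M_(n'.+1)) f a b : (a < n'.+1)%N -> (b < n'.+1)%N -> reprm B f ->
  reprm (relabel (tperm (inord a) (inord b)) B) (swapf a b f).
Proof. by move=> Ha Hb H i j; rewrite /relabel mxE H /swapf !tpermV. Qed.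

Lemma swapsE n' ps (M : 'M_(n'.+1)) f :
  all (fun p => (p.1 < n'.+1)%N && (p.2 < n'.+1)%N) ps -> reprm M f ->
  exists t : 'S_(n'.+1), reprm (relabel t M) (swaps ps f).
Proof.
elim: ps => [|p ps IH] /=.
  by move=> _ H; exists 1%g; move=> i j; rewrite mxE !perm1.
case/andP => /andP [Ha Hb] /IH H /H [t Ht].
by exists (tperm (inord p.1) (inord p.2) * t)%g; rewrite -relabelM; apply: swapE.
Qed.

Definition eqf n (f g : fn) :=
  all (fun i => all (fun j => f i j == g i j) (iota 0 n)) (iota 0 n).

Lemma eqfE n (B C : 'M[int]_n) f g : reprm B f -> reprm C g -> eqf n f g -> B = C.
Proof.
move=> HB HC /allP H; apply/matrixP => i j; rewrite HB HC.
have Hi : (i:nat) \in iota 0 n by rewrite mem_iota add0n ltn_ord.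
have Hj : (j:nat) \in iota 0 n by rewrite mem_iota add0n ltn_ord.
by move: (H _ Hi) => /allP /(_ _ Hj) /eqP.
Qed.

Definition mkf (t : seq (seq int)) : fn := fun i j => nth 0 (nth [::] t i) j.
Definition matmk n t : 'M[int]_n := \matrix_(i, j) mkf t i j.
Lemma matmkE n t : reprm (matmk n t) (mkf t). Proof. by move=> i j; rewrite mxE. Qed.

Definition check n (reps : seq (seq (seq int))) (wit : seq (seq (nat * seq (nat * nat)))) :=
  all (fun r => all (fun k =>
     let w := nth (0%N, [::]) (nth [::] wit r) k in
     [&& (w.1 < size reps)%N, all (fun p => (p.1 < n)%N && (p.2 < n)%N) w.2 &
     eqf n (mutf k (mkf (nth [::] reps r))) (swaps w.2 (mkf (nth [::] reps w.1)))])
   (iota 0 n)) (iota 0 (size reps)).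

Definition Pinv n reps (C : 'M[int]_n) :=
  exists2 r, (r < size reps)%N & isomorphic (matmk n (nth [::] reps r)) C.

Lemma mut_relabel n (s : 'S_n) k B :
  mutation k (relabel s B) = relabel s (mutation (s k) B).
Proof. by apply/matrixP => i j; rewrite !mxE !(inj_eq perm_inj). Qed.

Lemma closedP n' reps wit : check n'.+1 reps wit ->
  forall C : 'M_(n'.+1), Pinv reps C -> forall k, Pinv reps (mutation k C).
Proof.
move=> /allP Hc C [r Hr [s ->]] k.
have /Hc/allP/(_ (s k)) : r \in iota 0 (size reps) by rewrite mem_iota add0n Hr.
rewrite mem_iota add0n ltn_ord => /(_ isT).
set w := nth _ _ _; case/and3P => Hw Hps Heq.
have [t Ht] := swapsE Hps (@matmkE n'.+1 (nth [::] reps w.1)).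
exists w.1 => //; exists (s * t)%g.
rewrite -relabelM mut_relabel; congr relabel.
exact: eqfE (mutE _ (@matmkE _ _)) Ht Heq.
Qed.

Lemma finite_of n' (B : 'M_(n'.+1)) reps wit : check n'.+1 reps wit ->
  (0 < size reps)%N -> B = matmk _ (nth [::] reps 0) -> mutation_finite B.
Proof.
move=> Hc H0 HB.
exists [seq matmk n'.+1 (nth [::] reps r) | r <- iota 0 (size reps)].
have key : forall C, mut_equiv B C -> Pinv reps C.
  move=> C; elim => [|k C' _ IH|s C' _ [r Hr [t ->]]].
  - exists 0%N => //; exists 1%g; apply/matrixP=> i j; by rewrite HB !mxE !perm1.
  - exact: closedP Hc _ IH k.
  - by exists r => //; exists (s * t)%g; rewrite relabelM.
move=> C /key [r Hr Hiso]; exists (matmk n'.+1 (nth [::] reps r)) => //.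
by apply/mapP; exists r; rewrite ?mem_iota ?add0n.
Qed.

Definition gf (arrows : seq (nat * nat * nat)) : fn := fun i j =>
  foldr (fun (a : nat * nat * nat) (acc : int) =>
      ((if (a.1.1 == j) && (a.1.2 == i) then (a.2 : int) else 0)
       - (if (a.1.1 == i) && (a.1.2 == j) then (a.2 : int) else 0)) + acc) 0 arrows.

Lemma graph_ofE n arrows : reprm (graph_of n arrows) (gf arrows).
Proof.
move=> i j; rewrite mxE; elim: arrows => [|a s IH]; first by rewrite big_nil.
by rewrite big_cons IH.
Qed.
Definition reps6 : seq (seq (seq int)) := [:: [:: [:: (Posz 0); (Posz 1); (Negz 0); (Posz 1); (Negz 0); (Posz 1)]; [:: (Negz 0); (Posz 0); (Posz 0); (Posz 0); (Posz 0); (Posz 0)]; [:: (Posz 1); (Posz 0); (Posz 0); (Negz 1); (Posz 0); (Posz 0)]; [:: (Negz 0); (Posz 0); (Posz 2); (Posz 0); (Posz 0); (Posz 0)]; [:: (Posz 1); (Posz 0); (Posz 0); (Posz 0); (Posz 0); (Negz 1)]; [:: (Negz 0); (Posz 0); (Posz 0); (Posz 0); (Posz 2); (Posz 0)]]; [:: [:: (Posz 0); (Negz 0); (Posz 1); (Negz 0); (Posz 1); (Negz 0)]; [:: (Posz 1); (Posz 0); (Negz 0); (Posz 0); (Negz 0); (Posz 0)]; [:: (Negz 0); (Posz 1); (Posz 0); (Negz 0); (Posz 0); (Posz 1)]; [:: (Posz 1); (Posz 0); (Posz 1); (Posz 0); (Negz 0); (Posz 0)]; [:: (Negz 0); (Posz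 1); (Posz 0); (Posz 1); (Posz 0); (Negz 0)]; [:: (Posz 1); (Posz 0); (Negz 0); (Posz 0); (Posz 1); (Posz 0)]]; [:: [:: (Posz 0); (Negz 0); (Negz 0); (Posz 1); (Negz 0); (Posz 1)]; [:: (Posz 1); (Posz 0); (Posz 0); (Posz 0); (Posz 0); (Posz 0)]; [:: (Posz 1); (Posz 0); (Posz 0); (Negz 1); (Posz 0); (Posz 0)]; [:: (Negz 0); (Posz 0); (Posz 2); (Posz 0); (Posz 0); (Posz 0)]; [:: (Posz 1); (Posz 0); (Posz 0); (Posz 0); (Posz 0); (Negz 1)]; [:: (Negz 0); (Posz 0); (Posz 0); (Posz 0); (Posz 2); (Posz 0)]]; [:: [:: (Posz 0); (Posz 1); (Posz 0); (Negz 0); (Posz 0); (Negz 0)]; [:: (Negz 0); (Posz 0); (Posz 1); (Posz 0); (Posz 1); (Posz 0)]; [:: (Posz 0); (Negz 0); (Posz 0); (Negz 0); (Posz 0); (Posz 1)]; [:: (Posz 1); (Posz 0); (Posz 1); (Posz 0); (Negz 0); (Posz 0)]; [:: (Posz 0); (Negz 0); (Posz 0); (Posz 1); (Posz 0); (Negz 0)]; [:: (Posz 1); (Posz 0); (Negz 0); (Posz 0); (Posz 1); (Posz 0)]]; [:: [:: (Posz 0); (Posz 0); (Negz 0); (Negz 0); (Posz 1); (Posz 0)]; [:: (Posz 0); (Posz 0); (Posz 1); (Negz 0); (Negz 0); (Posz 0)]; [:: (Posz 1); (Negz 0); (Posz 0); (Posz 1); (Posz 0); (Negz 0)]; [:: (Posz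 1); (Posz 1); (Negz 0); (Posz 0); (Negz 0); (Posz 1)]; [:: (Negz 0); (Posz 1); (Posz 0); (Posz 1); (Posz 0); (Negz 0)]; [:: (Posz 0); (Posz 0); (Posz 1); (Negz 0); (Posz 1); (Posz 0)]]].
Definition wit6 : seq (seq (nat * seq (nat*nat))) := [:: [:: (1, [:: ]); (2, [:: ]); (0, [:: (2,3)]); (0, [:: (2,3)]); (0, [:: (4,5)]); (0, [:: (4,5)])]; [:: (0, [:: ]); (3, [:: ]); (4, [:: ]); (4, [:: (0,3); (2,3)]); (4, [:: (2,4); (3,5)]); (4, [:: (0,5); (2,5); (3,4); (4,5)])]; [:: (4, [:: (0,2); (1,4); (2,3); (4,5)]); (0, [:: ]); (2, [:: (2,3)]); (2, [:: (2,3)]); (2, [:: (4,5)]); (2, [:: (4,5)])]; [:: (4, [:: (0,2); (1,4); (2,3); (3,4); (4,5)]); (1, [:: ]); (4, [:: (1,4); (2,3); (3,5)]); (1, [:: (0,4); (1,3); (2,4); (3,5)]); (4, [:: (1,2); (2,5); (4,5)]); (1, [:: (0,2); (1,5)])]; [:: (1, [:: (0,2); (2,3)]); (1, [:: (0,4); (1,4); (2,3); (3,4)]); (1, [:: ]); (2, [:: (0,3); (1,5); (2,3); (4,5)]); (1, [:: (0,1); (3,5)]); (3, [:: (1,4); (2,4); (4,5)])]].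
Definition reps7 : seq (seq (seq int)) := [:: [:: [:: (Posz 0); (Negz 0); (Posz 1); (Negz 0); (Posz 1); (Negz 0); (Posz 1)]; [:: (Posz 1); (Posz 0); (Negz 1); (Posz 0); (Posz 0); (Posz 0); (Posz 0)]; [:: (Negz 0); (Posz 2); (Posz 0); (Posz 0); (Posz 0); (Posz 0); (Posz 0)]; [:: (Posz 1); (Posz 0); (Posz 0); (Posz 0); (Negz 1); (Posz 0); (Posz 0)]; [:: (Negz 0); (Posz 0); (Posz 0); (Posz 2); (Posz 0); (Posz 0); (Posz 0)]; [:: (Posz 1); (Posz 0); (Posz 0); (Posz 0); (Posz 0); (Posz 0); (Negz 1)]; [:: (Negz 0); (Posz 0); (Posz 0); (Posz 0); (Posz 0); (Posz 2); (Posz 0)]]; [:: [:: (Posz 0); (Posz 1); (Negz 0); (Posz 1); (Negz 0); (Posz 1); (Negz 0)]; [:: (Negz 0); (Posz 0); (Negz 0); (Posz 0); (Posz 1); (Posz 0); (Posz 1)]; [:: (Posz 1); (Posz 1); (Posz 0); (Negz 0); (Posz 0); (Negz 0); (Posz 0)]; [:: (Negz 0); (Posz 0); (Posz 1); (Posz 0); (Negz 0); (Posz 0); (Posz 1)]; [:: (Posz 1); (Negz 0); (Posz 0); (Posz 1); (Posz 0); (Negz 0); (Posz 0)]; [:: (Negz 0); (Posz 0); (Posz 1); (Posz 0); (Posz 1); (Posz 0); (Negz 0)]; [:: (Posz 1); (Negz 0); (Posz 0); (Negz 0); (Posz 0); (Posz 1); (Posz 0)]]].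
Definition wit7 : seq (seq (nat * seq (nat*nat))) := [:: [:: (1, [:: ]); (0, [:: (1,2)]); (0, [:: (1,2)]); (0, [:: (3,4)]); (0, [:: (3,4)]); (0, [:: (5,6)]); (0, [:: (5,6)])]; [:: (0, [:: ]); (1, [:: (0,2); (1,2); (3,6); (4,6); (5,6)]); (1, [:: (0,1); (1,2); (3,6); (4,6); (5,6)]); (1, [:: (0,4); (1,4); (2,3); (3,6); (5,6)]); (1, [:: (0,3); (1,4); (2,3); (3,6); (5,6)]); (1, [:: (0,6); (1,6); (2,5); (3,4); (4,6)]); (1, [:: (0,5); (1,6); (2,5); (3,4); (4,6)])]].


Lemma c6 : check 6 reps6 wit6. Proof. by vm_compute. Qed.
Lemma c7 : check 7 reps7 wit7. Proof. by vm_compute. Qed.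

Lemma e6 : X6 = matmk 6 (nth [::] reps6 0).
Proof. apply: eqfE (@graph_ofE _ _) (@matmkE _ _) _; by vm_compute. Qed.
Lemma e7 : X7 = matmk 7 (nth [::] reps7 0).
Proof. apply: eqfE (@graph_ofE _ _) (@matmkE _ _) _; by vm_compute. Qed.

Theorem mainTheorem1 : mutation_finite X6 /\ mutation_finite X7.
Proof.
split; [exact: finite_of c6 isT e6 | exact: finite_of c7 isT e7].
Qed.
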